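(* Any $(M,d_s,d_x,\epsilon)$ code must satisfy \[\epsilon\ge\sup_{P_{\bar X|\bar Z\bar Y}}\ \sup_{\gamma\ge0}\Big\{\mathbb E\Big[\inf_{z\in\widehat{\mathcal S},\,y\in\widehat{\mathcal X}}\mathbb P\big[f_{\bar X|\bar Z\bar Y}(S,X,z,y)\ge\gamma\mid X\big]\Big]-\exp(-\gamma)\Big\},\] where $(S,X)\sim P_{SX}$, the first supremum is over conditional distributions $P_{\bar X|\bar Z\bar Y}:\widehat{\mathcal S}\times\widehat{\mathcal X}\to\mathcal X$ such that the Radon–Nikodym derivative of $P_{\bar X|\bar Z=z,\bar Y=y}$ with respect to $P_X$ at $x$ exists for every $z\in\widehat{\mathcal S}$, $y\in\widehat{\mathcal X}$ and $P_X$-a.e. $x$, and \[f_{\bar X|\bar Z\bar Y}(s,x,z,y)=\log\frac{\mathrm dP_{\bar X|\bar Z=z,\bar Y=y}}{\mathrm dP_X}(x)+\sup_{\lambda_s\ge0}\lambda_s(\mathsf d_s(s,z)-d_s)+\sup_{\lambda_x\ge0}\lambda_x(\mathsf d_x(x,y)-d_x)-\log M.\]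
   Context: Let $\mathcal S,\mathcal X,\widehat{\mathcal S},\widehat{\mathcal X}$ be finite sets, $P_{SX}$ a distribution on $\mathcal S\times\mathcal X$, and $\mathsf d_s:\mathcal S\times\widehat{\mathcal S}\to[0,\infty)$, $\mathsf d_x:\mathcal X\times\widehat{\mathcal X}\to[0,\infty)$ distortion measures; fix $d_s,d_x\ge0$. An $(M,d_s,d_x,\epsilon)$ code is a random encoder $P_{U|X}:\mathcal X\to\{1,\dots,M\}$ and a random decoder $P_{ZY|U}:\{1,\dots,M\}\to\widehat{\mathcal S}\times\widehat{\mathcal X}$ (so $S-X-U-(Z,Y)$) such that $\mathbb P[\mathsf d_s(S,Z)>d_s\text{ or }\mathsf d_x(X,Y)>d_x]\le\epsilon$. $\log$ and $\exp$ are to a common base. *)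

(* Defs.v *)
From HB Require Import structures.
From mathcomp Require Import all_boot all_order all_algebra.
From mathcomp Require Import all_classical all_reals all_analysis.
Set Implicit Arguments. Unset Strict Implicit. Unset Printing Implicit Defensive.
Import Order.TTheory GRing.Theory Num.Theory.
Local Open Scope classical_set_scope.
Local Open Scope ring_scope.

Definition stochastic (R : realType) (A B : finType) (W : A -> B -> R) : Prop :=
  (forall a b, 0 <= W a b) /\ (forall a, \sum_(b : B) W a b = 1).

Definition is_dist2 (R : realType) (S X : finType) (P : S -> X -> R) : Prop :=
  (forall s x, 0 <= P s x) /\ \sum_(s : S) \sum_(x : X) P s x = 1.

Definition marg (R : realType) (S X : finType) (P : S -> X -> R) (x : X) : R :=
  \sum_(s : S) P s x.

(* An (M, d_s, d_x, eps) code: random encoder W = P_{U|X} : X -> {1..M}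
   (represented by 'I_M) and random decoder D = P_{ZY|U}, with excess
   distortion probability at most eps. *)
Definition is_code (R : realType) (S X Sh Xh : finType) (P : S -> X -> R)
  (dS : S -> Sh -> R) (dX : X -> Xh -> R) (M : nat) (ds dx eps : R)
  (W : X -> 'I_M -> R) (D : 'I_M -> Sh * Xh -> R) : Prop :=
  stochastic W /\ stochastic D /\
  \sum_(s : S) \sum_(x : X) \sum_(u : 'I_M) \sum_(zy : Sh * Xh)
     P s x * W x u * D u zy *
       (if (dS s zy.1 > ds) || (dX x zy.2 > dx) then 1 else 0) <= eps.

Definition elogb (R : realType) (b t : R) : \bar R :=
  if 0 < t then (ln t / ln b)%:E else -oo%E.

(* Sum in \bar R where +oo absorbs (so (-oo) + (+oo) = +oo); this is the
   convention used for f when an excess distortion gives an infinite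
   penalty term. *)
Definition addpinf (R : realType) (a b : \bar R) : \bar R :=
  if (a == +oo%E) || (b == +oo%E) then +oo%E else (a + b)%E.

Definition suplam (R : realType) (t : R) : \bar R :=
  ereal_sup [set (l * t)%:E | l in [set l : R | 0 <= l]].

(* f_{Xbar|Zbar Ybar}(s, x, z, y); Q = P_{Xbar|Zbar Ybar}, density
   dQ/dP_X (x) = Q z y x / P_X x (on the support of P_X). *)
Definition finfo (R : realType) (S X Sh Xh : finType) (b : R) (P : S -> X -> R)
  (dS : S -> Sh -> R) (dX : X -> Xh -> R) (M : nat) (ds dx : R)
  (Q : Sh * Xh -> X -> R) (s : S) (x : X) (z : Sh) (y : Xh) : \bar R :=
  addpinf (addpinf (elogb b (Q (z, y) x / marg P x))
                   (suplam (dS s z - ds)))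
          (addpinf (suplam (dX x y - dx)) (- (ln M%:R / ln b)%:E)%E).

Definition condprob (R : realType) (S X Sh Xh : finType) (b : R) (P : S -> X -> R)
  (dS : S -> Sh -> R) (dX : X -> Xh -> R) (M : nat) (ds dx : R)
  (Q : Sh * Xh -> X -> R) (gamma : R) (x : X) (z : Sh) (y : Xh) : R :=
  (\sum_(s : S) P s x *
      (if (gamma%:E <= finfo b P dS dX M ds dx Q s x z y)%E then 1 else 0))
  / marg P x.
Arguments is_code {R S X Sh Xh} P dS dX M ds dx eps W D.

(* Main.v *)
Require Import Defs.
From HB Require Import structures.
From mathcomp Require Import all_boot all_order all_algebra.
From mathcomp Require Import all_classical all_reals all_analysis.
From mathcomp Require Import ring lra.
Import Order.TTheory GRing.Theory Num.Theory.
Local Open Scope classical_set_scope.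
Local Open Scope ring_scope.

Lemma suplam0 (R : realType) (t : R) : t <= 0 -> suplam t = 0%E.
Proof.
move=> t0; apply/eqP; rewrite eq_le; apply/andP; split.
- apply/ereal_supP => y [l /= l0 <-]; rewrite lee_fin.
  exact: mulr_ge0_le0.
- apply: ereal_sup_ubound; exists 0; first by rewrite /=.
  by rewrite mul0r.
Qed.

Lemma elogb_npinf (R : realType) (b t : R) : elogb b t != +oo%E.
Proof. by rewrite /elogb; case: ifP. Qed.

Lemma ind_bound (R : realType) (S X Sh Xh : finType) (b : R)
  (P : S -> X -> R) (dS : S -> Sh -> R) (dX : X -> Xh -> R)
  (M : nat) (ds dx : R) (Q : Sh * Xh -> X -> R) (gamma : R) s x zy :
  1 < b -> (0 < M)%N -> 0 <= marg P x ->
  (if (gamma%:E <= finfo b P dS dX M ds dx Q s x zy.1 zy.2)%E then 1 else 0)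
  <= (if (ds < dS s zy.1) || (dx < dX x zy.2) then 1 else 0)
   + (if M%:R * b `^ gamma * marg P x <= Q zy x then 1 else 0) :> R.
Proof.
move=> b1 M0 PXge; case: zy => z y /=.
case: ifP => [hg|]; last first.
  by move=> _; rewrite addr_ge0 //; case: ifP.
case: ifP => [_|]; first by rewrite lerDl; case: ifP.
move/negbT; rewrite negb_or -!leNgt => /andP[hs hx].
rewrite add0r; move: hg; rewrite /finfo !suplam0 ?subr_le0 //.
have lnb : 0 < ln b by rewrite ln_gt0.
set t := Q (z, y) x / marg P x.
rewrite /addpinf /= (negbTE (elogb_npinf _ _ _)) /= adde0 add0e /=.
rewrite (negbTE (elogb_npinf _ _ _)).
have -> : forall r : R, (r%:E == +oo)%E = false by [].
rewrite /=.
rewrite /elogb; case: ifP => t0; last by rewrite /= leeNy_eq.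
rewrite /= -EFinD lee_fin => hg.
have PX0 : 0 < marg P x.
  rewrite lt_def; apply/andP; split.
    by apply/eqP => h; move: t0; rewrite /t h invr0 mulr0 ltxx.
  exact: PXge.
have M0' : 0 < (M%:R : R) by rewrite ltr0n.
have bg : 0 < b `^ gamma by rewrite powR_gt0 // (lt_trans ltr01 b1).
have c0 : 0 < M%:R * b `^ gamma by rewrite mulr_gt0.
suff : M%:R * b `^ gamma <= t by rewrite /t ler_pdivlMr // => ->.
rewrite -ler_ln ?posrE //.
rewrite lnM ?posrE // ln_powR.
have : gamma * ln b <= ln t - ln M%:R.
  by rewrite -ler_pdivlMr // mulrBl.
by rewrite lerBrDr addrC.
Qed.

Lemma swap3 (R : realType) (A B C : finType) (F : A -> B -> C -> R) :
  \sum_(a : A) \sum_(b : B) \sum_(c : C) F a b c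
  = \sum_(b : B) \sum_(c : C) \sum_(a : A) F a b c.
Proof.
rewrite exchange_big /=; apply: eq_bigr => b _; exact: exchange_big.
Qed.

Theorem corollary1 (R : realType) (S X Sh Xh : finType) (b : R)
  (P : S -> X -> R) (dS : S -> Sh -> R) (dX : X -> Xh -> R)
  (M : nat) (ds dx eps : R) (W : X -> 'I_M -> R) (D : 'I_M -> Sh * Xh -> R) :
  1 < b ->
  is_dist2 P ->
  (forall s zs, 0 <= dS s zs) -> (forall x zx, 0 <= dX x zx) ->
  0 <= ds -> 0 <= dx ->
  is_code P dS dX M ds dx eps W D ->
  forall (Q : Sh * Xh -> X -> R), stochastic Q ->
  (forall zy x, marg P x = 0 -> Q zy x = 0) ->
  forall gamma : R, 0 <= gamma ->
  (eps%:E >=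
     (\sum_(x : X) (marg P x)%:E *
        ereal_inf [set (condprob b P dS dX M ds dx Q gamma x zy.1 zy.2)%:E
                  | zy in [set: Sh * Xh]])
     - (b `^ (- gamma))%:E)%E.
Proof.
move=> b1 [P0 P1] _ _ _ _ [[W0 W1] [[D0 D1] err]] Q [Q0 Q1] _ gamma g0.
have PXge x : 0 <= marg P x by rewrite /marg sumr_ge0.
have M0 : (0 < M)%N.
  rewrite lt0n; apply/negP => /eqP M0; subst M.
  have hF : forall x : X, False.
    by move=> x; move: (W1 x); rewrite big_ord0 => /eqP; rewrite eq_sym oner_eq0.
  move: P1; rewrite big1 => [/eqP|s _]; first by rewrite eq_sym oner_eq0.
  by rewrite big1 // => x; case: (hF x).
have [zy0 _ | hnone] := pickP (@predT (Sh * Xh)); last first.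
  move: (D1 (Ordinal M0)); rewrite big1 => [/eqP|zy _]; first by rewrite eq_sym oner_eq0.
  by move: (hnone zy).
have bg : 0 < b `^ gamma by rewrite powR_gt0 // (lt_trans ltr01 b1).
have c0 : 0 < M%:R * b `^ gamma by rewrite mulr_gt0 // ltr0n.
have cp0 x zy : 0 <= condprob b P dS dX M ds dx Q gamma x zy.1 zy.2.
  rewrite /condprob divr_ge0 // sumr_ge0 // => s _.
  by rewrite mulr_ge0 //; case: ifP.
pose inf x := ereal_inf [set (condprob b P dS dX M ds dx Q gamma x zy.1 zy.2)%:E
                  | zy in [set: Sh * Xh]].
have inf0 x : (0 <= inf x)%E.
  by apply/ereal_infP => _ [zy _ <-]; rewrite lee_fin.
have infle x zy : (inf x <= (condprob b P dS dX M ds dx Q gamma x zy.1 zy.2)%:E)%E.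
  by apply: ge_ereal_inf; exists (condprob b P dS dX M ds dx Q gamma x zy.1 zy.2)%:E => //; exists zy.
have infin x : inf x = (fine (inf x))%:E.
  rewrite fineK // ge0_fin_numE //.
  exact: (le_lt_trans (infle x zy0) (ltry _)).
pose m x := fine (inf x).
have mle x zy : m x <= condprob b P dS dX M ds dx Q gamma x zy.1 zy.2.
  by rewrite -lee_fin /m -infin.
have -> : (\sum_(x : X) (marg P x)%:E *
        ereal_inf [set (condprob b P dS dX M ds dx Q gamma x zy.1 zy.2)%:E
                  | zy in [set: Sh * Xh]])%E = (\sum_(x : X) marg P x * m x)%:E.
  rewrite -sumEFin; apply: eq_bigr => x _.
  by rewrite -/(inf x) infin EFinM.
rewrite -EFinB lee_fin.
pose I s x (zy : Sh * Xh) : R :=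
  if (gamma%:E <= finfo b P dS dX M ds dx Q s x zy.1 zy.2)%E then 1 else 0.
pose E s x (zy : Sh * Xh) : R :=
  if (ds < dS s zy.1) || (dx < dX x zy.2) then 1 else 0.
pose G x (zy : Sh * Xh) : R :=
  if M%:R * b `^ gamma * marg P x <= Q zy x then 1 else 0.
have I0 s x zy : 0 <= I s x zy by rewrite /I; case: ifP.
have G0 x zy : 0 <= G x zy by rewrite /G; case: ifP.
have T0 s x u zy : 0 <= P s x * W x u * D u zy by rewrite !mulr_ge0.
have WD1 x : \sum_(u < M) \sum_(zy : Sh * Xh) W x u * D u zy = 1.
  rewrite -(W1 x); apply: eq_bigr => u _.
  by rewrite -big_distrr /= D1 mulr1.
have stepA : \sum_(x : X) marg P x * m x <=
  \sum_(s : S) \sum_(x : X) \sum_(u < M) \sum_(zy : Sh * Xh)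
     P s x * W x u * D u zy * I s x zy.
  rewrite exchange_big /=; apply: ler_sum => x _.
  rewrite swap3.
  set k := marg P x * m x.
  rewrite -[k]mul1r -(WD1 x) !big_distrl /=.
  apply: ler_sum => u _; rewrite big_distrl /=; apply: ler_sum => zy _.
  have -> : \sum_(s : S) P s x * W x u * D u zy * I s x zy
     = W x u * D u zy * \sum_(s : S) P s x * I s x zy.
    by rewrite big_distrr /=; apply: eq_bigr => s _; ring.
  rewrite ler_wpM2l ?mulr_ge0 // /k.
  have [PX0|PXn0] := eqVneq (marg P x) 0.
    by rewrite PX0 mul0r sumr_ge0 // => s _; rewrite mulr_ge0.
  have PXp : 0 < marg P x by rewrite lt_def PXn0 PXge.
  by rewrite mulrC -ler_pdivlMr //; exact: mle x zy.
have stepB : \sum_(s : S) \sum_(x : X) \sum_(u < M) \sum_(zy : Sh * Xh)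
     P s x * W x u * D u zy * I s x zy <=
  \sum_(s : S) \sum_(x : X) \sum_(u < M) \sum_(zy : Sh * Xh)
     P s x * W x u * D u zy * E s x zy +
  \sum_(s : S) \sum_(x : X) \sum_(u < M) \sum_(zy : Sh * Xh)
     P s x * W x u * D u zy * G x zy.
  rewrite -big_split; apply: ler_sum => s _.
  rewrite -big_split; apply: ler_sum => x _.
  rewrite -big_split; apply: ler_sum => u _.
  rewrite -big_split; apply: ler_sum => zy _.
  rewrite /= -mulrDr; apply: ler_wpM2l => //.
  exact: ind_bound.
have stepC : \sum_(s : S) \sum_(x : X) \sum_(u < M) \sum_(zy : Sh * Xh)
     P s x * W x u * D u zy * G x zy <= b `^ (- gamma).
  pose c := M%:R * b `^ gamma.
  have cpos : 0 < c := c0.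
  rewrite exchange_big /=.
  apply: (@le_trans _ _ (\sum_(x : X) \sum_(u < M) \sum_(zy : Sh * Xh)
                          D u zy * (Q zy x / c))).
    apply: ler_sum => x _; rewrite swap3; apply: ler_sum => u _.
    apply: ler_sum => zy _.
    have -> : \sum_(s : S) P s x * W x u * D u zy * G x zy
        = W x u * D u zy * (marg P x * G x zy).
      by rewrite /marg big_distrl big_distrr /=; apply: eq_bigr => s _; ring.
    have PG : marg P x * G x zy <= Q zy x / c.
      rewrite /G; case: ifP => h.
        by rewrite mulr1 ler_pdivlMr // mulrC.
      by rewrite mulr0 divr_ge0 // ltW.
    have W1' : W x u <= 1.
      rewrite -(W1 x) (bigD1 u) //= lerDl sumr_ge0 //.
    apply: (le_trans (ler_wpM2l _ PG)); first by rewrite mulr_ge0.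
    rewrite -mulrA; apply: ler_piMl => //.
    by rewrite mulr_ge0 // divr_ge0 // ltW.
  rewrite swap3.
  have -> : \sum_(u < M) \sum_(zy : Sh * Xh) \sum_(x : X) D u zy * (Q zy x / c)
      = \sum_(u < M) (1 / c).
    apply: eq_bigr => u _.
    rewrite -(D1 u) big_distrl /=; apply: eq_bigr => zy _.
    rewrite -mulr_sumr -mulr_suml Q1; ring.
  rewrite sumr_const card_ord /c powRN.
  rewrite -mulr_natr le_eqVlt; apply/orP; left; apply/eqP.
  by field; rewrite gt_eqF // pnatr_eq0 -lt0n M0.
have errE : \sum_(s : S) \sum_(x : X) \sum_(u < M) \sum_(zy : Sh * Xh)
     P s x * W x u * D u zy * E s x zy <= eps by [].
have h := le_trans stepA stepB.
rewrite lerBlDr; apply: (le_trans h); exact: lerD errE stepC.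
Qed.
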